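(* Let $\mu$ be a nonzero finite Borel measure on $\mathbb{R}$ with compact support, with moments $y_k=\int x^k d\mu$ and $\mathbf{y}=(y_k)_{k\in\mathbb{N}}$. For $d\in\mathbb{N}$ consider the semidefinite program $$\rho_d=\min_{a,b\in\mathbb{R}}\{\,b-a:\ \mathbf{H}_d(\theta_a\,\mathbf{y})\succeq0,\ \mathbf{H}_d(-\theta_b\,\mathbf{y})\succeq0\,\}.$$ Then (a) this program has an optimal solution $(a_d,b_d)$ for every $d\in\mathbb{N}$; (b) for any sequence $(a_d,b_d)_{d\in\mathbb{N}}$ of optimal solutions, $(a_d,b_d)\to(a^*,b^* )$ as $d\to\infty$ for some real $a^*\le b^*$ with $\mathrm{supp}\,\mu\subseteq[a^*,b^*]$; moreover $[a^*,b^*]$ is the smallest closed interval containing $\mathrm{supp}\,\mu$, and if $\mathrm{supp}\,\mu$ is an interval then $\mathrm{supp}\,\mu=[a^*,b^*]$.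
   Context: For a sequence $\mathbf{y}=(y_k)_{k\in\mathbb{N}}$ and a polynomial $\theta(x)=\sum_{k=0}^s\theta_kx^k$, $\mathbf{H}_d(\theta\,\mathbf{y})$ is the $(d+1)\times(d+1)$ symmetric matrix with entries $\sum_{k=0}^s\theta_k\,y_{i+j+k-2}$, $i,j=1,\ldots,d+1$. For $a\in\mathbb{R}$, $\theta_a(x)=x-a$; thus $\mathbf{H}_d(\theta_a\mathbf{y})(i,j)=y_{i+j-1}-a\,y_{i+j-2}$ and $\mathbf{H}_d(-\theta_b\mathbf{y})(i,j)=b\,y_{i+j-2}-y_{i+j-1}$. $\succeq0$ denotes positive semidefiniteness. $\mathrm{supp}\,\mu$ is the smallest closed set whose complement has $\mu$-measure zero. *)

(* Defs.v *)
From Stdlib Require Import Reals Lra.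
Open Scope R_scope.

Fixpoint fsum (f : nat -> R) (n : nat) : R :=
  match n with
  | O => 0
  | S k => fsum f k + f k
  end.

Inductive borel : (R -> Prop) -> Prop :=
| borel_open : forall U, open_set U -> borel U
| borel_compl : forall A, borel A -> borel (fun x => ~ A x)
| borel_union : forall A : nat -> R -> Prop,
    (forall n, borel (A n)) -> borel (fun x => exists n, A n x).

Definition is_finite_borel_measure (mu : (R -> Prop) -> R) : Prop :=
  (forall A, borel A -> 0 <= mu A) /\
  mu (fun _ => False) = 0 /\
  (forall A : nat -> R -> Prop,
      (forall n, borel (A n)) ->
      (forall n m x, n <> m -> A n x -> A m x -> False) ->
      infinite_sum (fun n => mu (A n)) (mu (fun x => exists n, A n x))).

Definition supp (mu : (R -> Prop) -> R) (x : R) : Prop :=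
  forall C : R -> Prop, closed_set C -> mu (fun z => ~ C z) = 0 -> C x.

(* v is the integral of a nonnegative simple function
   sum_{i<n} c_i 1_{A_i} (A_i disjoint Borel) lying below f *)
Definition simple_lower (mu : (R -> Prop) -> R) (f : R -> R) (v : R) : Prop :=
  exists (n : nat) (c : nat -> R) (A : nat -> R -> Prop),
    (forall i, (i < n)%nat -> borel (A i) /\ 0 <= c i) /\
    (forall i j x, (i < n)%nat -> (j < n)%nat -> i <> j -> A i x -> A j x -> False) /\
    (forall i x, (i < n)%nat -> A i x -> c i <= f x) /\
    v = fsum (fun i => c i * mu (A i)) n.

(* Lebesgue integral: int f dmu = int f^+ dmu - int f^- dmu, each the
   supremum of integrals of simple functions below; both assumed finite *)
Definition is_integral (mu : (R -> Prop) -> R) (f : R -> R) (r : R) : Prop :=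
  exists p q : R,
    is_lub (simple_lower mu (fun x => Rmax (f x) 0)) p /\
    is_lub (simple_lower mu (fun x => Rmax (- f x) 0)) q /\
    r = p - q.

Definition is_moment_seq (mu : (R -> Prop) -> R) (y : nat -> R) : Prop :=
  forall k : nat, is_integral mu (fun x => x ^ k) (y k).

(* H_d(theta y)(i,j), 0-indexed i,j in {0..d}; theta = sum_{k<=s} theta_k x^k *)
Definition hankel (d s : nat) (theta : nat -> R) (y : nat -> R) (i j : nat) : R :=
  fsum (fun k => theta k * y (i + j + k)%nat) (S s).

Definition psd (d : nat) (M : nat -> nat -> R) : Prop :=
  forall v : nat -> R,
    0 <= fsum (fun i => fsum (fun j => v i * M i j * v j) (S d)) (S d).

(* coefficients of theta_a(x) = x - a *)
Definition theta (a : R) (k : nat) : R :=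
  match k with O => - a | 1%nat => 1 | _ => 0 end.
(* coefficients of -theta_b(x) = b - x *)
Definition neg_theta (b : R) (k : nat) : R :=
  match k with O => b | 1%nat => -1 | _ => 0 end.

Definition feasible (y : nat -> R) (d : nat) (a b : R) : Prop :=
  psd d (hankel d 1 (theta a) y) /\ psd d (hankel d 1 (neg_theta b) y).

Definition optimal (y : nat -> R) (d : nat) (a b : R) : Prop :=
  feasible y d a b /\ forall a' b', feasible y d a' b' -> b - a <= b' - a'.

Definition is_interval (S : R -> Prop) : Prop :=
  forall x z t, S x -> S z -> x <= t <= z -> S t.

(* Main.v *)
Require Import Defs.
From Stdlib Require Import Reals Lra Lia Classical FunctionalExtensionality PropExtensionality.
Open Scope R_scope.

Lemma set_ext (A B : R -> Prop) : (forall x, A x <-> B x) -> A = B.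
Proof. intro H; apply functional_extensionality; intro x; apply propositional_extensionality; auto. Qed.

Lemma fsum_ext f g n : (forall i, (i < n)%nat -> f i = g i) -> fsum f n = fsum g n.
Proof. induction n; simpl; intros H; auto. rewrite IHn by (intros; apply H; lia). rewrite (H n) by lia; auto. Qed.

Lemma fsum_plus f g n : fsum (fun i => f i + g i) n = fsum f n + fsum g n.
Proof. induction n; simpl; [lra|rewrite IHn; lra]. Qed.

Lemma fsum_minus f g n : fsum (fun i => f i - g i) n = fsum f n - fsum g n.
Proof. induction n; simpl; [lra|rewrite IHn; lra]. Qed.

Lemma fsum_scal c f n : fsum (fun i => c * f i) n = c * fsum f n.
Proof. induction n; simpl; [lra|rewrite IHn; lra]. Qed.

Lemma fsum_scal_r c f n : fsum (fun i => f i * c) n = fsum f n * c.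
Proof. induction n; simpl; [lra|rewrite IHn; lra]. Qed.

Lemma fsum_le f g n : (forall i, (i<n)%nat -> f i <= g i) -> fsum f n <= fsum g n.
Proof. induction n; simpl; intros H; [lra|]. assert (f n <= g n) by (apply H; lia).
  assert (fsum f n <= fsum g n) by (apply IHn; intros; apply H; lia). lra. Qed.

Lemma fsum_zero f n : (forall i, (i<n)%nat -> f i = 0) -> fsum f n = 0.
Proof. intros H. rewrite (fsum_ext f (fun _ => 0)) by auto. clear H. induction n; simpl; lra. Qed.

Lemma fsum_swap (f : nat -> nat -> R) n m :
  fsum (fun i => fsum (fun j => f i j) m) n = fsum (fun j => fsum (fun i => f i j) n) m.
Proof. induction n; simpl.
 - symmetry; apply fsum_zero; auto.
 - rewrite IHn, <- fsum_plus. reflexivity. Qed.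

Lemma fsum_first f n : fsum f (S n) = f 0%nat + fsum (fun i => f (S i)) n.
Proof. induction n; simpl; [lra|]. simpl in IHn. rewrite IHn; lra. Qed.

Lemma fsum_extend f n d : (n <= d)%nat -> (forall i, (n < i)%nat -> f i = 0) ->
  fsum f (S d) = fsum f (S n).
Proof. intros Hle H. induction Hle; auto. change (fsum f (S (S m))) with (fsum f (S m) + f (S m)).
  rewrite IHHle, H by lia. lra. Qed.

Lemma sum_f_R0_fsum f n : sum_f_R0 f n = fsum f (S n).
Proof. induction n; simpl; [lra|]. rewrite IHn. simpl. lra. Qed.

Lemma borel_ext A B : borel A -> (forall x, A x <-> B x) -> borel B.
Proof. intros HA H. rewrite <- (set_ext A B H). auto. Qed.

Lemma borel_True : borel (fun _ => True).
Proof. apply borel_open. intros x _. exists (mkposreal 1 Rlt_0_1). intros z _; auto. Qed.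

Lemma borel_False : borel (fun _ => False).
Proof. apply borel_open. intros x []. Qed.

Lemma borel_union2 A B : borel A -> borel B -> borel (fun x => A x \/ B x).
Proof. intros HA HB.
  set (F := fun n : nat => match n with 0%nat => A | _ => B end).
  apply (borel_ext (fun x => exists n, F n x)).
  - apply borel_union. intros [|n]; simpl; auto.
  - intros x; split. intros [[|n] H]; simpl in H; auto.
    intros [H|H]; [exists 0%nat|exists 1%nat]; auto. Qed.

Lemma borel_inter A B : borel A -> borel B -> borel (fun x => A x /\ B x).
Proof. intros HA HB.
  apply (borel_ext (fun x => ~ ((fun z => ~ A z) x \/ (fun z => ~ B z) x))).
  - apply borel_compl, borel_union2; apply borel_compl; auto.
  - intros x; split; intros H.
    + split; apply NNPP; intro; apply H; auto.
    + intros [?|?]; tauto. Qed.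

Lemma borel_gt c : borel (fun x => c < x).
Proof. apply borel_open. intros x Hx.
  assert (Hp: 0 < x - c) by lra. exists (mkposreal _ Hp). intros z Hz.
  unfold disc in Hz; simpl in Hz. apply Rabs_def2 in Hz. lra. Qed.

Lemma borel_lt c : borel (fun x => x < c).
Proof. apply borel_open. intros x Hx.
  assert (Hp: 0 < c - x) by lra. exists (mkposreal _ Hp). intros z Hz.
  unfold disc in Hz; simpl in Hz. apply Rabs_def2 in Hz. lra. Qed.

Lemma borel_ge c : borel (fun x => c <= x).
Proof. apply (borel_ext (fun x => ~ (x < c))). apply borel_compl, borel_lt.
  intros x; split; intros; lra. Qed.

Lemma borel_le c : borel (fun x => x <= c).
Proof. apply (borel_ext (fun x => ~ (c < x))). apply borel_compl, borel_gt.
  intros x; split; intros; lra. Qed.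

Lemma borel_cc c d : borel (fun x => c <= x <= d).
Proof. apply borel_inter; [apply borel_ge|apply borel_le]. Qed.

Lemma borel_oo c d : borel (fun x => c < x < d).
Proof. apply borel_inter; [apply borel_gt|apply borel_lt]. Qed.

Section Measure.
Variable mu : (R -> Prop) -> R.
Hypothesis Hmu : is_finite_borel_measure mu.

Lemma mu_pos A : borel A -> 0 <= mu A.
Proof. destruct Hmu as [H _]; auto. Qed.

Lemma mu_empty A : (forall x, ~ A x) -> mu A = 0.
Proof. intros H. replace A with (fun _ : R => False). destruct Hmu as [_ [H0 _]]; auto.
  apply set_ext; intros x; split; [tauto|apply H]. Qed.

Lemma mu_add A B : borel A -> borel B -> (forall x, A x -> B x -> False) ->
  mu (fun x => A x \/ B x) = mu A + mu B.
Proof. intros HA HB Hdisj.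
  destruct Hmu as [Hpos [Hemp Hadd]].
  set (F := fun n : nat => match n with 0%nat => A | 1%nat => B | _ => fun _ : R => False end).
  assert (HF: forall n, borel (F n)). { intros [|[|n]]; simpl; auto. apply borel_False. }
  assert (Hd: forall n m x, n <> m -> F n x -> F m x -> False).
  { intros n m x Hnm H1 H2; destruct n as [|[|n]], m as [|[|m]]; simpl in *;
    first [congruence | tauto | eapply Hdisj; eauto]. }
  pose proof (Hadd F HF Hd) as Hs.
  replace (fun x => exists n, F n x) with (fun x => A x \/ B x) in Hs.
  2: { apply set_ext. intros x; split. intros [H|H]; [exists 0%nat|exists 1%nat]; auto.
       intros [[|[|n]] H]; simpl in H; auto; tauto. }
  apply (uniqueness_sum _ _ _ Hs).
  assert (Hk: forall k, sum_f_R0 (fun n => mu (F n)) (S k) = mu A + mu B).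
  { induction k. simpl; lra. simpl. simpl in IHk. rewrite IHk, Hemp. lra. }
  intros eps He. exists 1%nat. intros n Hn. destruct n as [|k]; [lia|].
  rewrite Hk. unfold Rdist. replace (mu A + mu B - (mu A + mu B)) with 0 by lra.
  rewrite Rabs_R0; lra. Qed.

Lemma mu_mono A B : borel A -> borel B -> (forall x, A x -> B x) -> mu A <= mu B.
Proof. intros HA HB H.
  replace B with (fun x => A x \/ (B x /\ ~ A x)).
  - rewrite mu_add; auto. assert (0 <= mu (fun x => B x /\ ~ A x)).
    { apply mu_pos, borel_inter; auto. apply borel_compl; auto. } lra.
    apply borel_inter; auto. apply borel_compl; auto. tauto.
  - apply set_ext; intros x; split. intros [?|[? ?]]; auto.
    intros Hb. destruct (classic (A x)); auto. Qed.

Lemma mu_subadd A B : borel A -> borel B -> mu (fun x => A x \/ B x) <= mu A + mu B.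
Proof. intros HA HB.
  assert (HB': borel (fun x => B x /\ ~ A x)) by (apply borel_inter; auto; apply borel_compl; auto).
  replace (fun x => A x \/ B x) with (fun x => A x \/ (B x /\ ~ A x)).
  - rewrite mu_add; auto. assert (mu (fun x => B x /\ ~ A x) <= mu B).
    { apply mu_mono; auto. tauto. } lra. tauto.
  - apply set_ext; intros x; split. intros [?|[? ?]]; auto.
    intros [?|?]; auto. destruct (classic (A x)); auto. Qed.

Lemma mu_split A K : borel A -> borel K -> mu A = mu (fun x => A x /\ K x) + mu (fun x => A x /\ ~ K x).
Proof. intros HA HK. rewrite <- mu_add.
  - f_equal. apply set_ext; intros x; split. intros H; destruct (classic (K x)); tauto. tauto.
  - apply borel_inter; auto.
  - apply borel_inter; auto. apply borel_compl; auto.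
  - tauto. Qed.

Lemma mu_null_union (A : nat -> R -> Prop) : (forall n, borel (A n)) -> (forall n, mu (A n) = 0) ->
  mu (fun x => exists n, A n x) = 0.
Proof. intros HA H0.
  set (G := fun n x => forall k, (k < n)%nat -> ~ A k x).
  assert (HG: forall n, borel (G n)).
  { induction n.
    - apply (borel_ext _ _ borel_True). intros x; split; auto. intros _ k Hk; lia.
    - apply (borel_ext (fun x => G n x /\ ~ A n x)). apply borel_inter; auto. apply borel_compl; auto.
      intros x; split. intros [H1 H2] k Hk. destruct (Nat.eq_dec k n). subst; auto. apply H1; lia.
      intros H; split. intros k Hk; apply H; lia. apply H; lia. }
  set (D := fun n x => A n x /\ G n x).
  assert (HD: forall n, borel (D n)) by (intros; apply borel_inter; auto).
  assert (Hdisj: forall n m x, n <> m -> D n x -> D m x -> False).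
  { intros n m x Hnm [H1 H2] [H3 H4]. destruct (Nat.lt_ge_cases n m).
    apply (H4 n); auto. apply (H2 m); auto. lia. }
  destruct Hmu as [Hpos [Hemp Hadd]].
  pose proof (Hadd D HD Hdisj) as Hs.
  replace (fun x => exists n, D n x) with (fun x => exists n, A n x) in Hs.
  2: { apply set_ext; intros x; split.
       - intros [n Hn]. revert Hn. induction n as [n IH] using Wf_nat.lt_wf_ind. intros Hn.
         destruct (classic (exists k, (k < n)%nat /\ A k x)) as [[k [Hk1 Hk2]]|Hno].
         + apply (IH k); auto.
         + exists n. split; auto. intros k Hk Hak. apply Hno; eauto.
       - intros [n [Hn _]]; eauto. }
  apply (uniqueness_sum _ _ _ Hs).
  assert (HDz: forall n, mu (D n) = 0).
  { intros n. apply Rle_antisym. rewrite <- (H0 n). apply mu_mono; auto. unfold D; tauto.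
    apply Hpos; auto. }
  assert (Hk: forall k, sum_f_R0 (fun n => mu (D n)) k = 0).
  { induction k; simpl; rewrite HDz; [lra|rewrite IHk; lra]. }
  intros eps He. exists 0%nat. intros n _. rewrite Hk. unfold Rdist. rewrite Rminus_0_r, Rabs_R0; lra. Qed.

Definition Uf (F : nat -> R -> Prop) n x := exists i, (i < n)%nat /\ F i x.

Lemma borel_Uf F n : (forall i, (i<n)%nat -> borel (F i)) -> borel (Uf F n).
Proof. induction n; intros H.
  - apply (borel_ext _ _ borel_False). intros x; split; [tauto|]. intros [i [Hi _]]; lia.
  - apply (borel_ext (fun x => Uf F n x \/ F n x)). apply borel_union2.
    apply IHn; intros; apply H; lia. apply H; lia.
    intros x; split. intros [[i [Hi Hf]]|Hf]; exists i || exists n; split; auto; lia.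
    intros [i [Hi Hf]]. destruct (Nat.eq_dec i n). subst; auto. left; exists i; split; auto; lia. Qed.

Lemma mu_Uf F B n : (forall i, (i<n)%nat -> borel (F i)) -> borel B ->
  (forall i j x, (i<n)%nat -> (j<n)%nat -> i<>j -> F i x -> F j x -> False) ->
  fsum (fun i => mu (fun x => F i x /\ B x)) n = mu (fun x => Uf F n x /\ B x).
Proof. induction n; intros HF HB Hd.
  - simpl. symmetry. apply mu_empty. intros x [[i [Hi _]] _]; lia.
  - simpl. rewrite IHn; [ | intros; apply HF; lia | auto | intros i j x Hi Hj Hij; apply (Hd i j x); auto; lia].
    rewrite <- mu_add.
    + f_equal. apply set_ext; intros x; split.
      * intros [[[i [Hi Hf]] Hb]|[Hf Hb]]; split; auto; [exists i|exists n]; split; auto; lia.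
      * intros [[i [Hi Hf]] Hb]. destruct (Nat.eq_dec i n). subst; right; auto. left; split; auto. exists i; split; auto; lia.
    + apply borel_inter; auto. apply borel_Uf; intros; apply HF; lia.
    + apply borel_inter; auto.
    + intros x [[i [Hi Hf]] _] [Hf' _]. apply (Hd i n x); auto; lia. Qed.

End Measure.

Lemma abs_le_elim x y : Rabs x <= y -> -y <= x <= y.
Proof. unfold Rabs; destruct Rcase_abs; intros; lra. Qed.

Lemma div_lt_aux C x e : 0 < x -> C < e * x -> C / x < e.
Proof. intros Hx H. apply Rmult_lt_reg_r with x; auto. unfold Rdiv.
  rewrite Rmult_assoc, Rinv_l, Rmult_1_r by lra. lra. Qed.

Lemma div_le_aux C x e : 0 < x -> C <= e * x -> C / x <= e.
Proof. intros Hx H. apply Rmult_le_reg_r with x; auto. unfold Rdiv.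
  rewrite Rmult_assoc, Rinv_l, Rmult_1_r by lra. lra. Qed.

Lemma eventually_small C e : 0 < e -> exists n0, forall n, (n >= n0)%nat -> C / (INR n + 1) < e.
Proof. intros He. destruct (INR_unbounded (C / e)) as [n0 Hn0]. exists n0. intros n Hn.
  apply div_lt_aux. pose proof (pos_INR n); lra.
  assert (INR n0 <= INR n) by (apply le_INR; lia).
  assert (C / e * e = C) by (field; lra).
  assert (C / e < INR n + 1) by lra.
  apply Rmult_lt_compat_r with (r := e) in H1; auto. lra. Qed.

Lemma cv_bound u l C : 0 <= C -> (forall N, Rabs (u N - l) <= C / (INR N + 1)) -> Un_cv u l.
Proof. intros HC H eps He. destruct (eventually_small C eps He) as [n0 Hn0].
  exists n0. intros n Hn. unfold Rdist. eapply Rle_lt_trans; [apply H|]. apply Hn0; auto. Qed.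

Lemma cv_const c : Un_cv (fun _ => c) c.
Proof. intros eps He. exists 0%nat. intros. unfold Rdist. rewrite Rminus_diag, Rabs_R0; lra. Qed.

Lemma cv_ext u w l : Un_cv u l -> (forall N, u N = w N) -> Un_cv w l.
Proof. intros H E eps He. destruct (H eps He) as [N HN]. exists N; intros n Hn. rewrite <- E; auto. Qed.

Lemma cv_scal c u l : Un_cv u l -> Un_cv (fun N => c * u N) (c * l).
Proof. intros H. apply (CV_mult (fun _ => c) u); auto. apply cv_const. Qed.

Lemma cv_fsum (u : nat -> nat -> R) (l : nat -> R) n :
  (forall i, Un_cv (fun N => u N i) (l i)) -> Un_cv (fun N => fsum (u N) n) (fsum l n).
Proof. intros H. induction n; simpl. apply cv_const. apply CV_plus; auto. Qed.

Lemma cv_le_ev u l c : Un_cv u l -> (exists N0, forall N, (N >= N0)%nat -> u N <= c) -> l <= c.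
Proof. intros H [N0 HN0]. destruct (Rle_lt_dec l c); auto.
  destruct (H (l - c)) as [N HN]. lra. specialize (HN (max N N0) (Nat.le_max_l _ _)).
  specialize (HN0 (max N N0) (Nat.le_max_r _ _)).
  unfold Rdist in HN. apply Rabs_def2 in HN. lra. Qed.

Lemma cv_nonneg u l : Un_cv u l -> (forall N, 0 <= u N) -> 0 <= l.
Proof. intros H Hp. destruct (Rle_lt_dec 0 l); auto.
  destruct (H (- l)) as [N HN]. lra. specialize (HN N (le_n N)). specialize (Hp N).
  unfold Rdist in HN. apply Rabs_def2 in HN. lra. Qed.

Lemma rmax_lip u v : Rabs (Rmax u 0 - Rmax v 0) <= Rabs (u - v).
Proof. pose proof (Rle_abs (u - v)). pose proof (Rle_abs (-(u - v))). rewrite Rabs_Ropp in H0.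
  unfold Rmax; destruct (Rle_dec u 0), (Rle_dec v 0); apply Rabs_le; lra. Qed.

Definition Fq (y : nat -> R) k v d := fsum (fun i => fsum (fun j => v i * y (i + j + k)%nat * v j) (S d)) (S d).
Definition Pv (v : nat -> R) d t := fsum (fun i => v i * t ^ i) (S d).
Definition e0 (i : nat) : R := match i with O => 1 | _ => 0 end.

Lemma form_theta y d a0 v : fsum (fun i => fsum (fun j => v i * hankel d 1 (theta a0) y i j * v j) (S d)) (S d)
  = Fq y 1 v d - a0 * Fq y 0 v d.
Proof. unfold Fq. rewrite <- fsum_scal, <- fsum_minus. apply fsum_ext; intros i _.
  rewrite <- fsum_scal, <- fsum_minus. apply fsum_ext; intros j _. unfold hankel, theta. simpl. ring. Qed.

Lemma form_neg y d b0 v : fsum (fun i => fsum (fun j => v i * hankel d 1 (neg_theta b0) y i j * v j) (S d)) (S d)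
  = b0 * Fq y 0 v d - Fq y 1 v d.
Proof. unfold Fq. rewrite <- fsum_scal, <- fsum_minus. apply fsum_ext; intros i _.
  rewrite <- fsum_scal, <- fsum_minus. apply fsum_ext; intros j _. unfold hankel, neg_theta. simpl. ring. Qed.

Lemma psd_theta y d a0 : psd d (hankel d 1 (theta a0) y) <-> forall v, 0 <= Fq y 1 v d - a0 * Fq y 0 v d.
Proof. unfold psd; split; intros H v; specialize (H v); rewrite form_theta in *; auto. Qed.

Lemma psd_neg y d b0 : psd d (hankel d 1 (neg_theta b0) y) <-> forall v, 0 <= b0 * Fq y 0 v d - Fq y 1 v d.
Proof. unfold psd; split; intros H v; specialize (H v); rewrite form_neg in *; auto. Qed.

Lemma Fq_e0 y k d : Fq y k e0 d = y k.
Proof. unfold Fq. rewrite fsum_first. rewrite (fsum_zero (fun i => fsum _ _)).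
  - rewrite fsum_first. rewrite fsum_zero. simpl. ring. intros; simpl; ring.
  - intros i _. apply fsum_zero. intros; simpl; ring. Qed.

Section RS.
Variable mu : (R -> Prop) -> R.
Hypothesis Hmu : is_finite_borel_measure mu.
Variables a b : R.
Hypothesis Hab : a <= b.
Hypothesis Hconc : mu (fun x => ~ (a <= x <= b)) = 0.

Definition Ks x := a <= x <= b.
Definition hN (N : nat) := (b - a + 1) / (INR N + 1).
Definition cell N (j : nat) x := (a <= x <= b) /\ a + INR j * hN N <= x < a + (INR j + 1) * hN N.
Definition tag N (j : nat) := Rmin (a + INR j * hN N) b.
Definition RS (f : R -> R) N := fsum (fun j => f (tag N j) * mu (cell N j)) (S N).

Lemma hN_pos N : 0 < hN N.
Proof. unfold hN. apply Rdiv_lt_0_compat. lra. pose proof (pos_INR N); lra. Qed.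

Lemma hN_mul N : (INR N + 1) * hN N = b - a + 1.
Proof. unfold hN. field. pose proof (pos_INR N); lra. Qed.

Lemma borel_Ks : borel Ks.
Proof. apply borel_cc. Qed.

Lemma cell_borel N j : borel (cell N j).
Proof. apply borel_inter. apply borel_cc. apply borel_inter; [apply borel_ge|apply borel_lt]. Qed.

Lemma cell_disj N j k x : j <> k -> cell N j x -> cell N k x -> False.
Proof. intros Hjk [_ [H1 H2]] [_ [H3 H4]]. pose proof (hN_pos N).
  destruct (Nat.lt_ge_cases j k).
  - assert (INR j + 1 <= INR k) by (rewrite <- S_INR; apply le_INR; lia).
    assert ((INR j + 1) * hN N <= INR k * hN N) by (apply Rmult_le_compat_r; lra). lra.
  - assert (INR k + 1 <= INR j) by (rewrite <- S_INR; apply le_INR; lia).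
    assert ((INR k + 1) * hN N <= INR j * hN N) by (apply Rmult_le_compat_r; lra). lra. Qed.

Lemma cover_aux h : 0 < h -> forall n x, a <= x < a + (INR n + 1) * h ->
  exists j, (j <= n)%nat /\ a + INR j * h <= x < a + (INR j + 1) * h.
Proof. intros Hh. induction n; intros x Hx.
  - exists 0%nat. simpl in *. split; [lia|lra].
  - destruct (Rlt_dec x (a + (INR n + 1) * h)).
    + destruct (IHn x) as [j [Hj Hj2]]. lra. exists j; split; auto.
    + exists (S n). split; auto. rewrite S_INR in *. lra. Qed.

Lemma cell_cover N x : Ks x -> exists j, (j < S N)%nat /\ cell N j x.
Proof. intros Hx. destruct (cover_aux (hN N) (hN_pos N) N x) as [j [Hj Hj2]].
  rewrite hN_mul. unfold Ks in Hx; lra. exists j; split. lia. split; auto. Qed.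

Lemma tag_K N j : Ks (tag N j).
Proof. unfold Ks, tag, Rmin. pose proof (hN_pos N). pose proof (pos_INR j).
  assert (0 <= INR j * hN N) by (apply Rmult_le_pos; lra).
  destruct Rle_dec; lra. Qed.

Lemma tag_close N j x : cell N j x -> 0 <= x - tag N j <= hN N.
Proof. intros [Hx [H1 H2]]. unfold tag, Rmin. destruct Rle_dec; lra. Qed.

Lemma cell_K N j x : cell N j x -> Ks x.
Proof. intros [H _]; exact H. Qed.

Lemma partition N B : borel B ->
  fsum (fun j => mu (fun x => cell N j x /\ B x)) (S N) = mu (fun x => Ks x /\ B x).
Proof. intros HB. rewrite (mu_Uf mu Hmu); auto.
  - f_equal. apply set_ext; intros x; split.
    + intros [[j [_ Hc]] Hb]. split; auto. eapply cell_K; eauto.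
    + intros [Hk Hb]. split; auto. destruct (cell_cover N x Hk) as [j [Hj Hc]]. exists j; auto.
  - intros; apply cell_borel.
  - intros i j x _ _ Hij H1 H2. eapply cell_disj; eauto. Qed.

Lemma mu_conc B : borel B -> mu B = mu (fun x => Ks x /\ B x).
Proof. intros HB. rewrite (mu_split mu Hmu B Ks HB borel_Ks).
  assert (H0: mu (fun x => B x /\ ~ Ks x) = 0).
  { apply Rle_antisym. rewrite <- Hconc. apply (mu_mono mu Hmu).
    apply borel_inter; auto. apply borel_compl, borel_Ks.
    apply borel_compl, borel_Ks. unfold Ks; tauto.
    apply (mu_pos mu Hmu). apply borel_inter; auto. apply borel_compl, borel_Ks. }
  rewrite H0, Rplus_0_r. f_equal. apply set_ext; tauto. Qed.

Lemma mu_Ks_total : mu Ks = mu (fun _ => True).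
Proof. rewrite (mu_conc (fun _ => True) borel_True). f_equal. apply set_ext; tauto. Qed.

Lemma partition_whole N : fsum (fun j => mu (cell N j)) (S N) = mu Ks.
Proof. replace (mu Ks) with (mu (fun x => Ks x /\ True)).
  rewrite <- (partition N _ borel_True). apply fsum_ext; intros. f_equal. apply set_ext; tauto.
  f_equal. apply set_ext; tauto. Qed.

Lemma mu_cell_pos N j : 0 <= mu (cell N j).
Proof. apply (mu_pos mu Hmu), cell_borel. Qed.

Lemma RS_plus f g N : RS (fun t => f t + g t) N = RS f N + RS g N.
Proof. unfold RS. rewrite <- fsum_plus. apply fsum_ext; intros; ring. Qed.
Lemma RS_minus f g N : RS (fun t => f t - g t) N = RS f N - RS g N.
Proof. unfold RS. rewrite <- fsum_minus. apply fsum_ext; intros; ring. Qed.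
Lemma RS_scal c f N : RS (fun t => c * f t) N = c * RS f N.
Proof. unfold RS. rewrite <- fsum_scal. apply fsum_ext; intros; ring. Qed.
Lemma RS_ext f g N : (forall t, f t = g t) -> RS f N = RS g N.
Proof. intros H. unfold RS. apply fsum_ext; intros. rewrite H; auto. Qed.
Lemma RS_fsum (G : nat -> R -> R) n N :
  RS (fun t => fsum (fun i => G i t) n) N = fsum (fun i => RS (G i) N) n.
Proof. unfold RS. rewrite <- fsum_swap. apply fsum_ext; intros. rewrite fsum_scal_r; auto. Qed.
Lemma RS_nonneg f N : (forall t, Ks t -> 0 <= f t) -> 0 <= RS f N.
Proof. intros H. unfold RS. rewrite <- (fsum_zero (fun _ => 0) (S N)) by auto.
  apply fsum_le; intros. apply Rmult_le_pos. apply H, tag_K. apply mu_cell_pos. Qed.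

Lemma RS_bump q z d c1 C2 N : 0 < d -> hN N <= d -> 0 <= c1 ->
  (forall t, Ks t -> q t <= C2) -> (forall t, Ks t -> Rabs (t - z) <= 2 * d -> q t <= C2 - c1) ->
  RS q N <= C2 * mu Ks - c1 * mu (fun x => Ks x /\ z - d < x < z + d).
Proof. intros Hd HhN Hc1 H1 H2.
  rewrite <- (partition_whole N), <- (partition N _ (borel_oo (z - d) (z + d))).
  rewrite <- !fsum_scal, <- fsum_minus. unfold RS. apply fsum_le. intros j _.
  assert (Hm: mu (fun x => cell N j x /\ z - d < x < z + d) <= mu (cell N j)).
  { apply (mu_mono mu Hmu). apply borel_inter. apply cell_borel. apply borel_oo. apply cell_borel. tauto. }
  assert (Hm0: 0 <= mu (fun x => cell N j x /\ z - d < x < z + d)).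
  { apply (mu_pos mu Hmu). apply borel_inter. apply cell_borel. apply borel_oo. }
  pose proof (mu_cell_pos N j).
  destruct (classic (exists x, cell N j x /\ z - d < x < z + d)) as [[x [Hc Hx]]|Hno].
  - assert (q (tag N j) <= C2 - c1).
    { apply H2. apply tag_K. pose proof (tag_close N j x Hc). apply Rabs_le; lra. }
    assert (q (tag N j) * mu (cell N j) <= (C2 - c1) * mu (cell N j)) by (apply Rmult_le_compat_r; lra).
    assert (c1 * mu (fun x => cell N j x /\ z - d < x < z + d) <= c1 * mu (cell N j)) by (apply Rmult_le_compat_l; lra).
    lra.
  - rewrite (mu_empty mu Hmu (fun x => cell N j x /\ z - d < x < z + d)).
    2: { intros x Hx; apply Hno; eauto. }
    assert (q (tag N j) <= C2) by (apply H1, tag_K).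
    assert (q (tag N j) * mu (cell N j) <= C2 * mu (cell N j)) by (apply Rmult_le_compat_r; lra).
    lra. Qed.

Lemma lub_approx g L p N : (forall x, 0 <= g x) -> 0 <= L ->
  (forall x t, Ks x -> Ks t -> Rabs (g x - g t) <= L * Rabs (x - t)) ->
  is_lub (simple_lower mu g) p -> Rabs (p - RS g N) <= L * hN N * mu Ks.
Proof.
  intros Hg HL Hlip [Hub Hleast].
  assert (Hclose: forall j x, cell N j x -> Rabs (g x - g (tag N j)) <= L * hN N).
  { intros j x Hc. pose proof (tag_close N j x Hc).
    eapply Rle_trans. apply Hlip. eapply cell_K; eauto. apply tag_K.
    apply Rmult_le_compat_l; auto. rewrite Rabs_right; lra. }
  pose proof (hN_pos N) as Hh.
  assert (HLh: 0 <= L * hN N) by (apply Rmult_le_pos; lra).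
  apply Rabs_le; split.
  - set (c := fun j => Rmax (g (tag N j) - L * hN N) 0).
    assert (Hs: simple_lower mu g (fsum (fun j => c j * mu (cell N j)) (S N))).
    { exists (S N), c, (cell N). split; [|split; [|split]]; auto.
      - intros i _. split. apply cell_borel. unfold c; apply Rmax_r.
      - intros i j x _ _ Hij H1 H2; eapply cell_disj; eauto.
      - intros i x _ Hc. unfold c. apply Rmax_lub; auto.
        specialize (Hclose i x Hc). apply abs_le_elim in Hclose. lra. }
    specialize (Hub _ Hs).
    assert (fsum (fun j => (g (tag N j) - L * hN N) * mu (cell N j)) (S N) <= fsum (fun j => c j * mu (cell N j)) (S N)).
    { apply fsum_le; intros. apply Rmult_le_compat_r. apply mu_cell_pos. unfold c; apply Rmax_l. }
    replace (fsum (fun j => (g (tag N j) - L * hN N) * mu (cell N j)) (S N)) with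
      (RS g N - L * hN N * mu Ks) in H.
    lra. rewrite <- (partition_whole N), <- fsum_scal. unfold RS. rewrite <- fsum_minus.
    apply fsum_ext; intros; ring.
  - cut (p <= RS g N + L * hN N * mu Ks). lra.
    apply Hleast. intros v [n [c [A [HA [Hd [Hc Hv]]]]]]. subst v.
    assert (E1: forall i, (i < n)%nat -> mu (A i) = fsum (fun j => mu (fun x => cell N j x /\ A i x)) (S N)).
    { intros i Hi. rewrite partition. apply mu_conc. apply HA; auto. apply HA; auto. }
    rewrite (fsum_ext _ (fun i => fsum (fun j => c i * mu (fun x => cell N j x /\ A i x)) (S N)) n).
    2: { intros i Hi. rewrite E1, fsum_scal; auto. }
    rewrite fsum_swap.
    rewrite <- (partition_whole N), <- fsum_scal. unfold RS. rewrite <- fsum_plus.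
    apply fsum_le. intros j _.
    assert (HU: fsum (fun i => mu (fun x => A i x /\ cell N j x)) n <= mu (cell N j)).
    { rewrite (mu_Uf mu Hmu); auto. apply (mu_mono mu Hmu).
      apply borel_inter. apply borel_Uf; intros; apply HA; auto. apply cell_borel. apply cell_borel. tauto.
      intros; apply HA; auto. apply cell_borel. }
    assert (Hgt: 0 <= g (tag N j) + L * hN N) by (pose proof (Hg (tag N j)); lra).
    apply Rle_trans with (fsum (fun i => (g (tag N j) + L * hN N) * mu (fun x => A i x /\ cell N j x)) n).
    + apply fsum_le. intros i Hi.
      replace (fun x => cell N j x /\ A i x) with (fun x => A i x /\ cell N j x) by (apply set_ext; tauto).
      assert (0 <= mu (fun x => A i x /\ cell N j x)).
      { apply (mu_pos mu Hmu). apply borel_inter. apply HA; auto. apply cell_borel. }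
      destruct (classic (exists x, A i x /\ cell N j x)) as [[x [Ha Hcx]]|Hno].
      * apply Rmult_le_compat_r; auto. specialize (Hc i x Hi Ha). specialize (Hclose j x Hcx).
        apply abs_le_elim in Hclose. lra.
      * rewrite (mu_empty mu Hmu (fun x => A i x /\ cell N j x)). lra. intros x Hx; apply Hno; eauto.
    + rewrite fsum_scal. replace ((g (tag N j)) * mu (cell N j) + L * hN N * mu (cell N j))
        with ((g (tag N j) + L * hN N) * mu (cell N j)) by ring.
      apply Rmult_le_compat_l; auto. Qed.

Variable y : nat -> R.
Hypothesis Hy : is_moment_seq mu y.

Lemma Ks_bound x : Ks x -> Rabs x <= Rabs a + Rabs b.
Proof. unfold Ks; intros Hx. pose proof (Rle_abs a). pose proof (Rle_abs (-a)). rewrite Rabs_Ropp in H0.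
  pose proof (Rle_abs b). pose proof (Rabs_pos a). pose proof (Rabs_pos b). apply Rabs_le; lra. Qed.

Lemma pow_lip k : exists L, 0 <= L /\ forall x t, Ks x -> Ks t -> Rabs (x^k - t^k) <= L * Rabs (x - t).
Proof. set (R0 := Rabs a + Rabs b). assert (HR0: 0 <= R0) by (unfold R0; pose proof (Rabs_pos a); pose proof (Rabs_pos b); lra).
  induction k.
  - exists 0. split. lra. intros. simpl. rewrite Rminus_diag, Rabs_R0. pose proof (Rabs_pos (x - t)). lra.
  - destruct IHk as [L [HL H]]. exists (R0 * L + R0 ^ k). split.
    apply Rplus_le_le_0_compat. apply Rmult_le_pos; auto. apply pow_le; auto.
    intros x t Hx Ht. replace (x ^ S k - t ^ S k) with (x * (x ^ k - t ^ k) + t ^ k * (x - t)) by (simpl; ring).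
    eapply Rle_trans. apply Rabs_triang. rewrite !Rabs_mult.
    assert (Rabs x * Rabs (x ^ k - t ^ k) <= R0 * (L * Rabs (x - t))).
    { apply Rmult_le_compat. apply Rabs_pos. apply Rabs_pos. apply Ks_bound; auto. apply H; auto. }
    assert (Rabs (t ^ k) * Rabs (x - t) <= R0 ^ k * Rabs (x - t)).
    { apply Rmult_le_compat_r. apply Rabs_pos. rewrite <- RPow_abs. apply pow_incr. split. apply Rabs_pos. apply Ks_bound; auto. }
    lra. Qed.

Lemma moment_cv k : Un_cv (fun N => RS (fun t => t ^ k) N) (y k).
Proof.
  destruct (pow_lip k) as [L [HL Hlip]].
  destruct (Hy k) as [p [q [Hp [Hq Hyk]]]].
  assert (HmK: 0 <= mu Ks) by (apply (mu_pos mu Hmu), borel_Ks).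
  apply cv_bound with (C := 2 * L * (b - a + 1) * mu Ks).
  { apply Rmult_le_pos; auto. apply Rmult_le_pos; lra. }
  intro N.
  pose proof (lub_approx (fun x => Rmax (x ^ k) 0) L p N) as H1.
  pose proof (lub_approx (fun x => Rmax (- x ^ k) 0) L q N) as H2.
  assert (E: RS (fun t => t ^ k) N = RS (fun x => Rmax (x ^ k) 0) N - RS (fun x => Rmax (- x ^ k) 0) N).
  { rewrite <- RS_minus. apply RS_ext. intros t. unfold Rmax. destruct Rle_dec, Rle_dec; lra. }
  assert (A1: Rabs (p - RS (fun x => Rmax (x ^ k) 0) N) <= L * hN N * mu Ks).
  { apply H1; auto. intros; apply Rmax_r. intros x t Hx Ht. eapply Rle_trans. apply rmax_lip. auto. }
  assert (A2: Rabs (q - RS (fun x => Rmax (- x ^ k) 0) N) <= L * hN N * mu Ks).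
  { apply H2; auto. intros; apply Rmax_r. intros x t Hx Ht. eapply Rle_trans. apply rmax_lip.
    replace (- x ^ k - - t ^ k) with (- (x ^ k - t ^ k)) by ring. rewrite Rabs_Ropp. auto. }
  replace (2 * L * (b - a + 1) * mu Ks / (INR N + 1)) with (2 * (L * hN N * mu Ks)) by (unfold hN; field; pose proof (pos_INR N); lra).
  rewrite E, Hyk. apply abs_le_elim in A1. apply abs_le_elim in A2. apply Rabs_le. lra. Qed.

Lemma core k v d : Un_cv (fun N => RS (fun t => t ^ k * (Pv v d t) ^ 2) N) (Fq y k v d).
Proof.
  apply cv_ext with (u := fun N => fsum (fun i => fsum (fun j => (v i * v j) * RS (fun t => t ^ (i + j + k)) N) (S d)) (S d)).
  - unfold Fq. apply cv_fsum; intro i; apply cv_fsum; intro j.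
    replace (v i * y (i + j + k)%nat * v j) with ((v i * v j) * y (i + j + k)%nat) by ring.
    apply cv_scal, moment_cv.
  - intro N. symmetry.
    rewrite (RS_ext _ (fun t => fsum (fun i => fsum (fun j => (v i * v j) * t ^ (i + j + k)) (S d)) (S d))).
    + rewrite RS_fsum. apply fsum_ext; intros i _. rewrite RS_fsum. apply fsum_ext; intros j _. apply RS_scal.
    + intros t. replace ((Pv v d t) ^ 2) with (Pv v d t * Pv v d t) by ring. unfold Pv. rewrite <- fsum_scal_r, <- fsum_scal.
      apply fsum_ext; intros i _. rewrite <- fsum_scal, <- fsum_scal. apply fsum_ext; intros j _.
      rewrite !pow_add. ring. Qed.

Lemma lim_lin c v d : Un_cv (fun N => RS (fun t => (t - c) * (Pv v d t) ^ 2) N) (Fq y 1 v d - c * Fq y 0 v d).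
Proof. apply cv_ext with (u := fun N => RS (fun t => t ^ 1 * (Pv v d t) ^ 2) N - c * RS (fun t => t ^ 0 * (Pv v d t) ^ 2) N).
  apply CV_minus. apply core. apply cv_scal, core.
  intros N. rewrite <- RS_scal, <- RS_minus. apply RS_ext; intros; simpl; ring. Qed.

Lemma lim_lin2 c v d : Un_cv (fun N => RS (fun t => (c - t) * (Pv v d t) ^ 2) N) (c * Fq y 0 v d - Fq y 1 v d).
Proof. apply cv_ext with (u := fun N => c * RS (fun t => t ^ 0 * (Pv v d t) ^ 2) N - RS (fun t => t ^ 1 * (Pv v d t) ^ 2) N).
  apply CV_minus. apply cv_scal, core. apply core.
  intros N. rewrite <- RS_scal, <- RS_minus. apply RS_ext; intros; simpl; ring. Qed.

Lemma Fq0_nonneg v d : 0 <= Fq y 0 v d.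
Proof. apply (cv_nonneg _ _ (core 0 v d)). intros N. apply RS_nonneg. intros t _. simpl.
  rewrite Rmult_1_l. apply pow2_ge_0. Qed.

Lemma feas_a v d : 0 <= Fq y 1 v d - a * Fq y 0 v d.
Proof. apply (cv_nonneg _ _ (lim_lin a v d)). intros N. apply RS_nonneg. intros t [Ht _].
  apply Rmult_le_pos. lra. apply pow2_ge_0. Qed.

Lemma feas_b v d : 0 <= b * Fq y 0 v d - Fq y 1 v d.
Proof. apply (cv_nonneg _ _ (lim_lin2 b v d)). intros N. apply RS_nonneg. intros t [_ Ht].
  apply Rmult_le_pos. lra. apply pow2_ge_0. Qed.

Lemma y0_eq : y 0%nat = mu Ks.
Proof. apply (UL_sequence (fun N => RS (fun t => t ^ 0) N)). apply moment_cv.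
  apply cv_ext with (u := fun _ => mu Ks). apply cv_const.
  intros N. rewrite <- (partition_whole N). unfold RS. apply fsum_ext; intros; simpl; ring. Qed.

Lemma lim_bump (u : nat -> R) l q z dl c1 C2 : Un_cv u l -> (forall N, u N = RS q N) -> 0 < dl -> 0 <= c1 ->
  (forall t, Ks t -> q t <= C2) -> (forall t, Ks t -> Rabs (t - z) <= 2 * dl -> q t <= C2 - c1) ->
  l <= C2 * mu Ks - c1 * mu (fun x => Ks x /\ z - dl < x < z + dl).
Proof. intros Hu E Hdl Hc1 H1 H2. apply (cv_le_ev u); auto.
  destruct (eventually_small (b - a + 1) dl Hdl) as [n0 Hn0]. exists n0. intros N HN.
  rewrite E. apply RS_bump; auto. left; apply Hn0; auto. Qed.

End RS.

Lemma open_oo c d : open_set (fun x => c < x < d).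
Proof. intros x Hx.
  assert (Hp: 0 < Rmin (x - c) (d - x)) by (apply Rmin_pos; lra). exists (mkposreal _ Hp). intros z Hz.
  unfold disc in Hz; simpl in Hz. apply Rabs_def2 in Hz.
  pose proof (Rmin_l (x - c) (d - x)). pose proof (Rmin_r (x - c) (d - x)). lra. Qed.

Lemma arch_helper e : 0 < e -> exists n, e <= INR n + 1 /\ / (INR n + 1) <= e.
Proof. intros He. destruct (INR_unbounded (e + / e)) as [n Hn]. exists n.
  pose proof (Rinv_0_lt_compat e He). split. lra.
  rewrite <- (Rinv_inv e) at 1. apply Rinv_le_contravar; auto. lra. Qed.

Section Supp.
Variable mu : (R -> Prop) -> R.
Hypothesis Hmu : is_finite_borel_measure mu.

Lemma supp_pos z dl : supp mu z -> 0 < dl -> 0 < mu (fun x => z - dl < x < z + dl).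
Proof. intros Hz Hdl. destruct (Rle_lt_dec (mu (fun x => z - dl < x < z + dl)) 0) as [H|H]; auto.
  exfalso. assert (H0: mu (fun x => z - dl < x < z + dl) = 0).
  { apply Rle_antisym; auto. apply (mu_pos mu Hmu), borel_oo. }
  assert (E: (fun x => ~ ~ (z - dl < x < z + dl)) = (fun x => z - dl < x < z + dl)).
  { apply set_ext; intros x; split; [apply NNPP|tauto]. }
  apply (Hz (fun x => ~ (z - dl < x < z + dl))).
  - unfold closed_set, complementary. rewrite E. apply open_oo.
  - rewrite E; auto.
  - lra. Qed.

Lemma not_supp_nbhd x : ~ supp mu x -> exists dl, 0 < dl /\ mu (fun t => x - dl < t < x + dl) = 0.
Proof. intros H. unfold supp in H. apply not_all_ex_not in H. destruct H as [C HC].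
  apply imply_to_and in HC. destruct HC as [Hcl HC]. apply imply_to_and in HC. destruct HC as [Hnull HCx].
  destruct (Hcl x HCx) as [dl Hdl]. exists dl. split. apply cond_pos.
  apply Rle_antisym. rewrite <- Hnull. apply (mu_mono mu Hmu). apply borel_oo.
  apply (borel_open (complementary C)); auto.
  intros t Ht. apply Hdl. unfold disc. apply Rabs_def1; lra.
  apply (mu_pos mu Hmu), borel_oo. Qed.

Lemma null_nbhd_not_supp c d z : mu (fun x => c < x < d) = 0 -> c < z < d -> ~ supp mu z.
Proof. intros H0 Hz Hs. set (dl := Rmin (z - c) (d - z)).
  assert (Hdl: 0 < dl) by (apply Rmin_pos; lra).
  pose proof (supp_pos z dl Hs Hdl).
  assert (mu (fun x => z - dl < x < z + dl) <= mu (fun x => c < x < d)).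
  { apply (mu_mono mu Hmu); try apply borel_oo. intros x Hx. pose proof (Rmin_l (z - c) (d - z)).
    pose proof (Rmin_r (z - c) (d - z)). unfold dl in Hx. lra. }
  lra. Qed.

Lemma null_cc c s : c <= s -> (forall x, c <= x <= s -> ~ supp mu x) -> mu (fun x => c <= x <= s) = 0.
Proof. intros Hcs Hns.
  set (T := fun u => c <= u <= s /\ mu (fun x => c <= x <= u) = 0).
  assert (Tc: T c).
  { split. lra. destruct (not_supp_nbhd c (Hns c ltac:(lra))) as [dl [Hdl H0]].
    apply Rle_antisym. rewrite <- H0. apply (mu_mono mu Hmu). apply borel_cc. apply borel_oo.
    intros; lra. apply (mu_pos mu Hmu), borel_cc. }
  assert (Hb: bound T) by (exists s; intros u [Hu _]; lra).
  destruct (completeness T Hb (ex_intro _ c Tc)) as [sg [Hub Hlst]].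
  assert (Hcsg: c <= sg) by (apply Hub; auto).
  assert (Hsgs: sg <= s) by (apply Hlst; intros u [Hu _]; lra).
  destruct (not_supp_nbhd sg (Hns sg ltac:(lra))) as [dl [Hdl H0]].
  assert (Hu: exists u, T u /\ sg - dl < u).
  { apply NNPP; intro Hn. assert (sg <= sg - dl). apply Hlst. intros u Tu.
    destruct (Rle_lt_dec u (sg - dl)); auto. exfalso; apply Hn; eauto. lra. }
  destruct Hu as [u [[Hu1 Hu2] Hu3]].
  set (w := Rmin (sg + dl / 2) s).
  assert (Hw: T w).
  { assert (Hwl: w <= s) by apply Rmin_r. assert (Hwu: w <= sg + dl/2) by apply Rmin_l.
    assert (c <= w) by (unfold w, Rmin; destruct Rle_dec; lra).
    split. lra. apply Rle_antisym.
    - apply Rle_trans with (mu (fun x => (c <= x <= u) \/ (sg - dl < x < sg + dl))).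
      apply (mu_mono mu Hmu). apply borel_cc. apply borel_union2. apply borel_cc. apply borel_oo.
      intros x Hx. destruct (Rle_lt_dec x u). left; lra. right; lra.
      eapply Rle_trans. apply (mu_subadd mu Hmu). apply borel_cc. apply borel_oo. lra.
    - apply (mu_pos mu Hmu), borel_cc. }
  assert (w <= sg) by (apply Hub; auto).
  assert (w = s). { unfold w, Rmin in *. destruct Rle_dec; lra. }
  rewrite <- H1. destruct Hw; auto. Qed.

Lemma supp_exists : mu (fun _ => True) <> 0 -> exists x, supp mu x.
Proof. intros Hnz. apply NNPP; intro Hn. apply Hnz.
  replace (fun _ : R => True) with (fun x => exists n, (fun n x => - INR n <= x <= INR n) n x).
  apply (mu_null_union mu Hmu). intros; apply borel_cc.
  intros n. apply null_cc. pose proof (pos_INR n); lra. intros x _ Hx; apply Hn; eauto.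
  apply set_ext; intros x; split; auto. intros _. destruct (INR_unbounded (Rabs x)) as [n Hn'].
  exists n. apply abs_le_elim. lra. Qed.

End Supp.

Lemma poly_pow (al be : R) n : exists v, forall d, (n <= d)%nat -> forall t, Pv v d t = (al * t + be) ^ n.
Proof. exists (fun i => if Nat.leb i n then C n i * al ^ i * be ^ (n - i) else 0).
  intros d Hd t. unfold Pv. rewrite (fsum_extend _ n d Hd).
  - rewrite binomial, sum_f_R0_fsum. apply fsum_ext. intros i Hi.
    replace (Nat.leb i n) with true by (symmetry; apply Nat.leb_le; lia).
    rewrite Rpow_mult_distr. ring.
  - intros i Hi. replace (Nat.leb i n) with false by (symmetry; apply Nat.leb_gt; lia). ring. Qed.

Lemma bump_real eps D u n : 0 < eps < D -> 0 <= u <= D ->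
  (u - eps) * ((D - u) ^ n) ^ 2 <= D * (D - eps) ^ (n * 2) /\
  (u <= eps / 2 -> (u - eps) * ((D - u) ^ n) ^ 2 <= D * (D - eps) ^ (n * 2) - eps / 2 * (D - eps / 2) ^ (n * 2)).
Proof. intros He Hu. rewrite <- pow_mult.
  assert (HX: 0 <= (D - u) ^ (n * 2)) by (apply pow_le; lra).
  assert (HC2: 0 <= D * (D - eps) ^ (n * 2)) by (apply Rmult_le_pos; [lra| apply pow_le; lra]).
  split.
  - destruct (Rle_lt_dec u eps).
    + assert ((u - eps) * (D - u) ^ (n * 2) <= 0). { replace 0 with (0 * (D - u) ^ (n * 2)) by ring. apply Rmult_le_compat_r; lra. } lra.
    + apply Rmult_le_compat; try lra. apply pow_incr; lra.
  - intros Hu2. assert (HY: (D - eps / 2) ^ (n * 2) <= (D - u) ^ (n * 2)) by (apply pow_incr; lra).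
    assert (0 <= (D - eps / 2) ^ (n * 2)) by (apply pow_le; lra).
    assert ((u - eps) * (D - u) ^ (n * 2) <= - (eps / 2) * (D - u) ^ (n * 2)) by (apply Rmult_le_compat_r; lra).
    assert (eps / 2 * (D - eps / 2) ^ (n * 2) <= eps / 2 * (D - u) ^ (n * 2)) by (apply Rmult_le_compat_l; lra).
    lra. Qed.

Lemma exists_as_bs mu M : is_finite_borel_measure mu -> mu (fun _ => True) <> 0 ->
  (forall x, supp mu x -> Rabs x <= M) ->
  exists aa bb, aa <= bb /\ supp mu aa /\ supp mu bb /\ (forall x, supp mu x -> aa <= x <= bb) /\
    mu (fun x => ~ (aa <= x <= bb)) = 0.
Proof. intros Hmu Hnz HM.
  destruct (supp_exists mu Hmu Hnz) as [x0 Hx0].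
  set (E := fun t => supp mu (- t)).
  assert (HbE: bound E). { exists M. intros t Ht. apply HM in Ht. rewrite Rabs_Ropp in Ht. apply abs_le_elim in Ht; lra. }
  assert (HeE: exists t, E t). { exists (- x0). unfold E. rewrite Ropp_involutive; auto. }
  destruct (completeness E HbE HeE) as [m [Hm1 Hm2]].
  assert (HbS: bound (supp mu)). { exists M. intros t Ht. apply HM in Ht. apply abs_le_elim in Ht; lra. }
  destruct (completeness (supp mu) HbS (ex_intro _ x0 Hx0)) as [bs [Hb1 Hb2]].
  assert (Hale: forall x, supp mu x -> - m <= x).
  { intros x Hx. assert (- x <= m). apply Hm1. unfold E; rewrite Ropp_involutive; auto. lra. }
  assert (Hain: supp mu (- m)).
  { apply NNPP; intro Hn. destruct (not_supp_nbhd mu Hmu _ Hn) as [dl [Hdl H0]].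
    assert (Ht: exists t, E t /\ m - dl < t).
    { apply NNPP; intro Hno. assert (m <= m - dl). apply Hm2. intros t Et.
      destruct (Rle_lt_dec t (m - dl)); auto. exfalso; apply Hno; eauto. lra. }
    destruct Ht as [t [Et Ht]]. unfold E in Et. pose proof (Hale _ Et).
    apply (null_nbhd_not_supp mu Hmu _ _ (- t) H0); auto. lra. }
  assert (Hbin: supp mu bs).
  { apply NNPP; intro Hn. destruct (not_supp_nbhd mu Hmu _ Hn) as [dl [Hdl H0]].
    assert (Ht: exists t, supp mu t /\ bs - dl < t).
    { apply NNPP; intro Hno. assert (bs <= bs - dl). apply Hb2. intros t Et.
      destruct (Rle_lt_dec t (bs - dl)); auto. exfalso; apply Hno; eauto. lra. }
    destruct Ht as [t [Et Ht]]. pose proof (Hb1 _ Et).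
    apply (null_nbhd_not_supp mu Hmu _ _ t H0); auto. lra. }
  exists (- m), bs. assert (Hab: - m <= bs) by (apply Hb1; auto).
  split; auto. split; auto. split; auto. split. intros x Hx; split; auto.
  set (B := fun n x => (- m - INR n - 1 <= x <= - m - / (INR n + 1)) \/ (bs + / (INR n + 1) <= x <= bs + INR n + 1)).
  replace (fun x => ~ (- m <= x <= bs)) with (fun x => exists n, B n x).
  - apply (mu_null_union mu Hmu). intros n; apply borel_union2; apply borel_cc.
    intros n. assert (Hi: 0 < / (INR n + 1) <= 1).
    { pose proof (pos_INR n). split. apply Rinv_0_lt_compat; lra.
      rewrite <- Rinv_1. apply Rinv_le_contravar; lra. }
    pose proof (pos_INR n).
    apply Rle_antisym. eapply Rle_trans. apply (mu_subadd mu Hmu); apply borel_cc.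
    rewrite !(null_cc mu Hmu). lra.
    lra. intros x Hx Hs. pose proof (Hb1 _ Hs). lra.
    lra. intros x Hx Hs. pose proof (Hale _ Hs). lra.
    apply (mu_pos mu Hmu). apply borel_union2; apply borel_cc.
  - apply set_ext; intros x; split.
    + intros [n [Hx|Hx]]; pose proof (pos_INR n); assert (0 < / (INR n + 1)) by (apply Rinv_0_lt_compat; lra); lra.
    + intros Hx. destruct (Rlt_le_dec x (- m)).
      * destruct (arch_helper (- m - x)) as [n [Hn1 Hn2]]. lra. exists n. left; lra.
      * destruct (arch_helper (x - bs)) as [n [Hn1 Hn2]]. lra. exists n. right; lra. Qed.

Lemma le_div_aux a x F : 0 < F -> a * F <= x -> a <= x / F.
Proof. intros HF H. apply Rmult_le_reg_r with F; auto. unfold Rdiv.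
  rewrite Rmult_assoc, Rinv_l, Rmult_1_r by lra. lra. Qed.

Lemma div_le_aux2 a x F : 0 < F -> a <= x / F -> a * F <= x.
Proof. intros HF H. apply Rmult_le_compat_r with (r := F) in H; [|lra]. unfold Rdiv in H.
  rewrite Rmult_assoc, Rinv_l, Rmult_1_r in H by lra. lra. Qed.

Section Main.
Variable mu : (R -> Prop) -> R.
Variable y : nat -> R.
Hypothesis Hmu : is_finite_borel_measure mu.
Hypothesis Hnz : mu (fun _ => True) <> 0.
Hypothesis Hy : is_moment_seq mu y.
Variables aa bb : R.
Hypothesis Hab : aa <= bb.
Hypothesis Haa : supp mu aa.
Hypothesis Hbb : supp mu bb.
Hypothesis Hsupp : forall x, supp mu x -> aa <= x <= bb.
Hypothesis Hconc : mu (fun x => ~ (aa <= x <= bb)) = 0.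

Lemma muK_pos : 0 < mu (Ks aa bb).
Proof. rewrite (mu_Ks_total mu Hmu aa bb Hconc). pose proof (mu_pos mu Hmu _ borel_True).
  destruct H; auto. exfalso; apply Hnz; auto. Qed.

Lemma y0_pos : 0 < y 0%nat.
Proof. rewrite (y0_eq mu Hmu aa bb Hab Hconc y Hy). apply muK_pos. Qed.

Lemma Fq0nn v d : 0 <= Fq y 0 v d.
Proof. apply (Fq0_nonneg mu Hmu aa bb Hab Hconc y Hy). Qed.
Lemma feasA v d : 0 <= Fq y 1 v d - aa * Fq y 0 v d.
Proof. apply (feas_a mu Hmu aa bb Hab Hconc y Hy). Qed.
Lemma feasB v d : 0 <= bb * Fq y 0 v d - Fq y 1 v d.
Proof. apply (feas_b mu Hmu aa bb Hab Hconc y Hy). Qed.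

Lemma feas_le_bb d a : (forall v, 0 <= Fq y 1 v d - a * Fq y 0 v d) -> a <= bb.
Proof. intros H. specialize (H e0). pose proof (feasB e0 d). rewrite !Fq_e0 in *.
  pose proof y0_pos. apply Rmult_le_reg_r with (y 0%nat); auto. lra. Qed.

Lemma feas_ge_aa d b : (forall v, 0 <= b * Fq y 0 v d - Fq y 1 v d) -> aa <= b.
Proof. intros H. specialize (H e0). pose proof (feasA e0 d). rewrite !Fq_e0 in *.
  pose proof y0_pos. apply Rmult_le_reg_r with (y 0%nat); auto. lra. Qed.

Lemma m_pos z dl : supp mu z -> 0 < dl -> 0 < mu (fun x => Ks aa bb x /\ z - dl < x < z + dl).
Proof. intros Hz Hdl. rewrite <- (mu_conc mu Hmu aa bb Hconc). apply supp_pos; auto. apply borel_oo. Qed.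

Lemma key_core z eps U : supp mu z -> 0 < eps < bb - aa ->
  (forall t, Ks aa bb t -> 0 <= U t <= bb - aa) ->
  (forall t, Ks aa bb t -> Rabs (t - z) <= eps / 2 -> U t <= eps / 2) ->
  exists n, forall (u : nat -> R) l q, Un_cv u l -> (forall N, u N = RS mu aa bb q N) ->
    (forall t, Ks aa bb t -> q t = (U t - eps) * ((bb - aa - U t) ^ n) ^ 2) -> l < 0.
Proof. intros Hz He HU HUz.
  set (D := bb - aa). set (dl := eps / 4).
  set (m := mu (fun x => Ks aa bb x /\ z - dl < x < z + dl)).
  assert (Hm: 0 < m) by (apply m_pos; auto; unfold dl; lra).
  set (mK := mu (Ks aa bb)). assert (HmK: 0 < mK) by apply muK_pos.
  set (r := (D - eps) / (D - eps / 2)).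
  assert (Hr: 0 <= r < 1).
  { unfold r. split. apply Rle_mult_inv_pos; unfold D in *; lra.
    apply div_lt_aux; unfold D in *; lra. }
  assert (Hpos: 0 < eps * m / (2 * D * mK)).
  { apply Rdiv_lt_0_compat. apply Rmult_lt_0_compat; lra.
    apply Rmult_lt_0_compat; auto. unfold D in *; lra. }
  destruct (pow_lt_1_zero r ltac:(rewrite Rabs_right; lra) _ Hpos) as [N0 HN0].
  exists N0. intros u l q Hu E Hq.
  set (k := (N0 * 2)%nat).
  set (X := (D - eps / 2) ^ k).
  assert (HX: 0 < X) by (apply pow_lt; unfold D in *; lra).
  assert (Hl: l <= D * (D - eps) ^ k * mK - eps / 2 * X * m).
  { apply (lim_bump mu Hmu aa bb Hab u l q z dl); auto.
    - unfold dl; lra.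
    - apply Rmult_le_pos. lra. lra.
    - intros t Ht. rewrite Hq; auto. apply bump_real. unfold D in *; lra. apply HU; auto.
    - intros t Ht Htz. rewrite Hq; auto. apply bump_real. unfold D in *; lra. apply HU; auto.
      apply HUz; auto. unfold dl in Htz; lra. }
  assert (Hs: r ^ k < eps * m / (2 * D * mK)).
  { specialize (HN0 k ltac:(unfold k; lia)). rewrite Rabs_right in HN0; auto.
    apply Rle_ge, pow_le; lra. }
  assert (E2: (D - eps) ^ k = r ^ k * X).
  { unfold X. rewrite <- Rpow_mult_distr. f_equal. unfold r. field. unfold D in *; lra. }
  assert (Hs2: r ^ k * (2 * D * mK) < eps * m).
  { apply Rmult_lt_compat_r with (r := 2 * D * mK) in Hs.
    replace (eps * m / (2 * D * mK) * (2 * D * mK)) with (eps * m) in Hs. auto.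
    field. split; unfold D in *; lra.
    apply Rmult_lt_0_compat; auto; unfold D in *; lra. }
  rewrite E2 in Hl.
  assert (X * (r ^ k * (2 * D * mK)) < X * (eps * m)) by (apply Rmult_lt_compat_l; auto).
  lra. Qed.

Lemma key_a eps : 0 < eps < bb - aa -> exists n0, forall d, (n0 <= d)%nat ->
  exists v, Fq y 1 v d - (aa + eps) * Fq y 0 v d < 0.
Proof. intros He.
  destruct (key_core aa eps (fun t => t - aa) Haa He) as [n Hn].
  { intros t [Ht1 Ht2]; lra. }
  { intros t _ Ht. apply abs_le_elim in Ht. lra. }
  destruct (poly_pow (-1) bb n) as [v Hv]. exists n. intros d Hd. exists v.
  apply (Hn _ _ (fun t => (t - (aa + eps)) * (Pv v d t) ^ 2) (lim_lin mu Hmu aa bb Hab Hconc y Hy (aa + eps) v d)); auto.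
  intros t _. rewrite Hv; auto. replace (-1 * t + bb) with (bb - aa - (t - aa)) by ring. ring. Qed.

Lemma key_b eps : 0 < eps < bb - aa -> exists n0, forall d, (n0 <= d)%nat ->
  exists v, (bb - eps) * Fq y 0 v d - Fq y 1 v d < 0.
Proof. intros He.
  destruct (key_core bb eps (fun t => bb - t) Hbb He) as [n Hn].
  { intros t [Ht1 Ht2]; lra. }
  { intros t _ Ht. apply abs_le_elim in Ht. lra. }
  destruct (poly_pow 1 (- aa) n) as [v Hv]. exists n. intros d Hd. exists v.
  apply (Hn _ _ (fun t => ((bb - eps) - t) * (Pv v d t) ^ 2) (lim_lin2 mu Hmu aa bb Hab Hconc y Hy (bb - eps) v d)); auto.
  intros t _. rewrite Hv; auto. replace (1 * t + - aa) with (bb - aa - (bb - t)) by ring. ring. Qed.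

Lemma part_a d : exists a b, optimal y d a b.
Proof.
  set (Ea := fun a => forall v, 0 <= Fq y 1 v d - a * Fq y 0 v d).
  assert (HbA: bound Ea) by (exists bb; intros a Ha; apply (feas_le_bb d); auto).
  destruct (completeness Ea HbA (ex_intro _ aa (fun v => feasA v d))) as [al [Hal1 Hal2]].
  set (Eb := fun t => forall v, 0 <= (- t) * Fq y 0 v d - Fq y 1 v d).
  assert (HbB: bound Eb).
  { exists (- aa); intros t Ht. assert (aa <= - t) by (apply (feas_ge_aa d); auto). lra. }
  assert (HeB: exists t, Eb t). { exists (- bb). intros v. rewrite Ropp_involutive. apply feasB. }
  destruct (completeness Eb HbB HeB) as [la [Hla1 Hla2]].
  assert (Hal: Ea al).
  { intros v. destruct (Fq0nn v d) as [Hp|H0].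
    - assert (al <= Fq y 1 v d / Fq y 0 v d).
      { apply Hal2. intros a Ha. apply le_div_aux; auto. specialize (Ha v); lra. }
      apply div_le_aux2 in H; auto. lra.
    - rewrite <- H0. pose proof (feasA v d). rewrite <- H0 in H. lra. }
  assert (Hla: forall v, 0 <= (- la) * Fq y 0 v d - Fq y 1 v d).
  { intros v. destruct (Fq0nn v d) as [Hp|H0].
    - assert (la <= - (Fq y 1 v d / Fq y 0 v d)).
      { apply Hla2. intros t Ht. cut (Fq y 1 v d / Fq y 0 v d <= - t). lra.
        apply div_le_aux; auto. specialize (Ht v); lra. }
      assert (Hq: Fq y 1 v d / Fq y 0 v d <= - la) by lra.
      assert (Fq y 1 v d <= - la * Fq y 0 v d).
      { apply Rmult_le_compat_r with (r := Fq y 0 v d) in Hq; [|lra].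
        replace (Fq y 1 v d / Fq y 0 v d * Fq y 0 v d) with (Fq y 1 v d) in Hq by (field; lra). auto. }
      lra.
    - rewrite <- H0. pose proof (feasB v d). rewrite <- H0 in H. lra. }
  exists al, (- la). split.
  - split. apply psd_theta; auto. apply psd_neg; auto.
  - intros a' b' [H1 H2]. pose proof (proj1 (psd_theta _ _ _) H1) as H1x. pose proof (proj1 (psd_neg _ _ _) H2) as H2x.
    assert (a' <= al) by (apply Hal1; auto).
    assert (- b' <= la). { apply Hla1. intros v. rewrite Ropp_involutive. auto. }
    lra. Qed.

Lemma part_b (A B : nat -> R) : (forall d, optimal y d (A d) (B d)) ->
  aa <= bb /\ Un_cv A aa /\ Un_cv B bb /\
  (forall x, supp mu x -> aa <= x <= bb) /\
  (forall c e, (forall x, supp mu x -> c <= x <= e) -> c <= aa /\ bb <= e) /\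
  (is_interval (supp mu) -> forall x, supp mu x <-> aa <= x <= bb).
Proof. intros Hopt.
  assert (HA: forall d v, 0 <= Fq y 1 v d - A d * Fq y 0 v d).
  { intros d. destruct (Hopt d) as [[H1 _] _]. apply psd_theta; auto. }
  assert (HB: forall d v, 0 <= B d * Fq y 0 v d - Fq y 1 v d).
  { intros d. destruct (Hopt d) as [[_ H2] _]. apply psd_neg; auto. }
  assert (Aa: forall d, aa <= A d).
  { intros d. destruct (Hopt d) as [[H1 H2] Hmin].
    assert (B d - A d <= B d - aa). apply Hmin. split; auto. apply psd_theta. intros; apply feasA. lra. }
  assert (Bb: forall d, B d <= bb).
  { intros d. destruct (Hopt d) as [[H1 H2] Hmin].
    assert (B d - A d <= bb - A d). apply Hmin. split; auto. apply psd_neg. intros; apply feasB. lra. }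
  assert (Ab: forall d, A d <= bb) by (intros d; apply (feas_le_bb d); auto).
  assert (Ba: forall d, aa <= B d) by (intros d; apply (feas_ge_aa d); auto).
  split; auto. split; [|split; [|split; [|split]]].
  - intros eps He. set (e := eps / 2). destruct (Rlt_le_dec e (bb - aa)).
    + destruct (key_a e ltac:(split; [unfold e; lra | auto])) as [n0 Hn0]. exists n0. intros d Hd.
      destruct (Hn0 d Hd) as [v Hv]. pose proof (HA d v). pose proof (Fq0nn v d). pose proof (Aa d).
      assert (A d < aa + e).
      { destruct (Rlt_le_dec (A d) (aa + e)); auto.
        assert (0 <= (A d - (aa + e)) * Fq y 0 v d) by (apply Rmult_le_pos; lra). lra. }
      unfold Rdist. rewrite Rabs_right; unfold e in *; lra.
    + exists 0%nat. intros d _. pose proof (Aa d). pose proof (Ab d).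
      unfold Rdist. rewrite Rabs_right; unfold e in *; lra.
  - intros eps He. set (e := eps / 2). destruct (Rlt_le_dec e (bb - aa)).
    + destruct (key_b e ltac:(split; [unfold e; lra | auto])) as [n0 Hn0]. exists n0. intros d Hd.
      destruct (Hn0 d Hd) as [v Hv]. pose proof (HB d v). pose proof (Fq0nn v d). pose proof (Bb d).
      assert (bb - e < B d).
      { destruct (Rlt_le_dec (bb - e) (B d)); auto.
        assert (0 <= ((bb - e) - B d) * Fq y 0 v d) by (apply Rmult_le_pos; lra). lra. }
      unfold Rdist. rewrite Rabs_left1; unfold e in *; lra.
    + exists 0%nat. intros d _. pose proof (Ba d). pose proof (Bb d).
      unfold Rdist. rewrite Rabs_left1; unfold e in *; lra.
  - auto.
  - intros c e H. split. apply (H aa Haa). apply (H bb Hbb).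
  - intros Hint x. split; auto. intros Hx. apply (Hint aa bb x); auto. Qed.

End Main.

Theorem corollary3p4 (mu : (R -> Prop) -> R) (y : nat -> R)
  (Hmu : is_finite_borel_measure mu)
  (Hnz : mu (fun _ => True) <> 0)
  (Hcpt : exists M : R, forall x, supp mu x -> Rabs x <= M)
  (Hy : is_moment_seq mu y) :
  (forall d : nat, exists a b : R, optimal y d a b) /\
  (forall A B : nat -> R, (forall d, optimal y d (A d) (B d)) ->
     exists a_s b_s : R,
       a_s <= b_s /\ Un_cv A a_s /\ Un_cv B b_s /\
       (forall x, supp mu x -> a_s <= x <= b_s) /\
       (forall c e, (forall x, supp mu x -> c <= x <= e) -> c <= a_s /\ b_s <= e) /\
       (is_interval (supp mu) -> forall x, supp mu x <-> a_s <= x <= b_s)).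
Proof.
  destruct Hcpt as [M HM].
  destruct (exists_as_bs mu M Hmu Hnz HM) as [aa [bb [Hab [Haa [Hbb [Hs Hc]]]]]].
  split.
  - intros d. apply (part_a mu y Hmu Hnz Hy aa bb Hab Hc).
  - intros A B Hopt. exists aa, bb. apply (part_b mu y Hmu Hnz Hy aa bb Hab Haa Hbb Hs Hc); auto.
Qed.
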